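(* Let $f:\mathcal X^n\to\mathcal T$, let $L:\mathcal T\times\mathcal T\to\mathbb R_+$ be a loss, $\varepsilon>0$, and let $M$ be an $L$-unbiased, $\varepsilon$-differentially private mechanism with values in $\mathcal T$. Then for all $x,x'\in\mathcal X^n$, $$\mathbb E[L(M(x),f(x))]\le e^{d_H(x,x')\varepsilon}\,\mathbb E[L(M(x'),f(x'))].$$
   Context: $d_H$ is the Hamming distance on $\mathcal X^n$; neighboring means $d_H\le1$. $M$ is $\varepsilon$-differentially private if $\mathbb P(M(x)\in S)\le e^\varepsilon\mathbb P(M(x')\in S)$ for all neighboring $x,x'$ and measurable $S$. $M$ is $L$-unbiased if $\mathbb E[L(M(x),f(x))]\le\mathbb E[L(M(x),t)]$ for all $x\in\mathcal X^n$, $t\in\mathcal T$. *)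

(* Defs.v *)
From HB Require Import structures.
From mathcomp Require Import all_boot all_order all_algebra.
From mathcomp Require Import all_classical all_reals all_analysis.
Set Implicit Arguments. Unset Strict Implicit. Unset Printing Implicit Defensive.
Import Order.TTheory GRing.Theory Num.Theory.
Local Open Scope ring_scope.

Definition hamming (X : Type) (n : nat) (x y : 'I_n -> X) : nat :=
  #|[set i : 'I_n | `[< x i <> y i >] ]|.

Section DP.
Context {d : measure_display} {T : measurableType d} {R : realType}
  {X : Type} {n : nat}.

Definition diff_private (eps : R) (M : ('I_n -> X) -> probability T R) : Prop :=
  forall x x' : 'I_n -> X, (hamming x x' <= 1)%N ->
  forall S : set T, measurable S ->
    (M x S <= (expR eps)%:E * M x' S)%E.

Definition L_unbiased (M : ('I_n -> X) -> probability T R)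
  (L : T -> T -> R) (f : ('I_n -> X) -> T) : Prop :=
  forall (x : 'I_n -> X) (t : T),
    (\int[M x]_y (L y (f x))%:E <= \int[M x]_y (L y t)%:E)%E.
End DP.

(* Main.v *)
Require Import Defs.
From HB Require Import structures.
From mathcomp Require Import all_boot all_order all_algebra.
From mathcomp Require Import all_classical all_reals all_analysis.
From mathcomp Require Import measurable_realfun.
Import Order.TTheory GRing.Theory Num.Theory.
Local Open Scope ring_scope.

Lemma hamming_step (X : Type) (n : nat) (x x' : 'I_n -> X) (k : nat) :
  hamming x x' = k.+1 ->
  exists y, (hamming x y <= 1)%N /\ hamming y x' = k.
Proof.
move=> hk.
have : [set i : 'I_n | `[< x i <> x' i >] ] != finset.set0.
  by apply/negP => /eqP h; rewrite /hamming h cards0 in hk.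
case/set0Pn => i; rewrite inE => /asboolP hi.
exists (fun j => if j == i then x' i else x j); split.
  rewrite /hamming -(cards1 i); apply: subset_leq_card; apply/fintype.subsetP => j.
  rewrite !inE => /asboolP; case: (j =P i) => [->|_] // h; by move/asboolP: h.
move: hk; rewrite /hamming (cardsD1 i) inE.
have -> : `[< x i <> x' i >] by exact/asboolP.
move=> [] <-; rewrite ?add0n; apply: eq_card => j; rewrite !inE.
case: eqP => [->|ji] /=.
  by apply/asboolP => -[].
by [].
Qed.

Theorem lemmaA2 (d : measure_display) (T : measurableType d) (R : realType)
  (X : Type) (n : nat) (f : ('I_n -> X) -> T) (L : T -> T -> R)
  (L_ge0 : forall s t, 0 <= L s t)
  (L_meas : forall t, measurable_fun setT (fun s => L s t))
  (eps : R) (eps_gt0 : 0 < eps)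
  (M : ('I_n -> X) -> probability T R)
  (M_unb : L_unbiased M L f) (M_dp : diff_private eps M) :
  forall x x' : 'I_n -> X,
    (\int[M x]_y (L y (f x))%:E
      <= (expR ((hamming x x')%:R * eps))%:E * \int[M x']_y (L y (f x'))%:E)%E.
Proof.
have step : forall (x y : 'I_n -> X), (hamming x y <= 1)%N ->
    (\int[M x]_s (L s (f x))%:E
      <= (expR eps)%:E * \int[M y]_s (L s (f y))%:E)%E.
  move=> x y hxy.
  apply: (le_trans (M_unb x (f y))).
  pose k : {nonneg R} := NngNum (ltW (expR_gt0 eps)).
  have -> : ((expR eps)%:E * \int[M y]_s (L s (f y))%:E)%E =
            (\int[mscale k (M y)]_s ((L s (f y))%:E))%E.
    rewrite ge0_integral_mscale //; last by move=> s _; rewrite lee_fin.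
    exact/measurable_EFinP/L_meas.
  apply: ge0_le_measure_integral => //.
    by move=> S mS; rewrite /mscale /=; apply: M_dp.
  by move=> s; rewrite lee_fin.
  exact/measurable_EFinP/L_meas.
move=> x x'; have [k hk] : exists k, hamming x x' = k by eexists.
rewrite hk; elim: k x hk => [|k IH] x hk.
  rewrite [X in expR X](_ : _ = 0); last by rewrite mul0r.
  rewrite expR0 mul1e.
  have -> : x' = x; last by [].
  apply/funext => i; apply/esym; apply: contrapT => hi.
  have : (0 < #|[set i : 'I_n | `[< x i <> x' i >] ]|)%N.
    by apply/card_gt0P; exists i; rewrite inE; exact/asboolP.
  by rewrite /hamming in hk; rewrite hk.
have [y [hxy hyx]] := @hamming_step _ _ x x' k hk.
apply: (le_trans (step x y hxy)).
rewrite -[k.+1]addn1 natrD mulrDl mul1r addrC expRD EFinM -muleA.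
rewrite lee_pmul2l ?lte_fin ?expR_gt0 //.
exact: IH.
Qed.
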